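(* Let $\mathfrak{A}=\langle A,\pi\rangle$ be an $\mathbb{M}$-algebra and let ${\sqsubseteq}\subseteq A\times A$ be a preorder that contains the ordering $\leq$ of $A$. Let $p_0,p_1:A\times A\to A$ be the two projections. The following conditions are equivalent: (1) $\sqsubseteq$ is a congruence ordering on $\mathfrak{A}$; (2) ${\sqsubseteq}=\ker\varphi$ for some morphism $\varphi:\mathfrak{A}\to\mathfrak{B}$ of $\mathbb{M}$-algebras; (3) for every $u\in\mathbb{M}({\sqsubseteq})$ (where $\sqsubseteq$ is regarded as a subset of $A\times A$ with the induced product order) we have $\pi(\mathbb{M}p_0(u))\sqsubseteq\pi(\mathbb{M}p_1(u))$; (4) $\sqsubseteq$ induces a subalgebra of $\mathfrak{A}\times\mathfrak{A}$, i.e. $\pi[\mathbb{M}({\sqsubseteq})]\subseteq{\sqsubseteq}$ where $\pi$ is the (componentwise) product of $\mathfrak{A}\times\mathfrak{A}$.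
   Context: Fix a set $\Xi$ of sorts. $\mathsf{Pos}^\Xi$ is the category whose objects (''sets'') are $\Xi$-sorted families $A=(A_\xi)_{\xi\in\Xi}$ of partially ordered sets (identified with their disjoint union; elements of different sorts are incomparable) and whose morphisms (''functions'') $f:A\to B$ are families of order-preserving maps $f_\xi:A_\xi\to B_\xi$. $\mathbb{M}$ is a monad on $\mathsf{Pos}^\Xi$: a functor with natural transformations $\mathrm{flat}:\mathbb{M}\mathbb{M}\Rightarrow\mathbb{M}$, $\mathrm{sing}:\mathrm{Id}\Rightarrow\mathbb{M}$ with $\mathrm{flat}\circ\mathrm{sing}=\mathrm{id}$, $\mathrm{flat}\circ\mathbb{M}\mathrm{sing}=\mathrm{id}$, $\mathrm{flat}\circ\mathrm{flat}=\mathrm{flat}\circ\mathbb{M}\mathrm{flat}$. Standing assumptions: $\mathbb{M}$ maps injective, surjective and bijective functions to functions of the same kind; $\mathbb{M}$ preserves preimages ($\mathbb{M}(f^{-1}[P])=(\mathbb{M}f)^{-1}[\mathbb{M}P]$ for $f:A\to B$, $P\subseteq B$); and $\mathbb{M}$ uses the standard ordering: for $s,t\in\mathbb{M}A$, $s\leq t$ iff $s=\mathbb{M}p(u)$, $t=\mathbb{M}q(u)$ for some $u\in\mathbb{M}R$, where $R\subseteq A\times A$ is the order relation of $A$ and $p,q$ are the projections. An $\mathbb{M}$-algebra is $\langle A,\pi\rangle$ with $\pi:\mathbb{M}A\to A$ satisfying $\pi\circ\mathbb{M}\pi=\pi\circ\mathrm{flat}$ and $\pi\circ\mathrm{sing}=\mathrm{id}$;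 a morphism $\varphi:\mathfrak{A}\to\mathfrak{B}$ is a function with $\varphi\circ\pi=\pi\circ\mathbb{M}\varphi$. The kernel of a function $f:A\to B$ is $\ker f=\{\langle a,a'\rangle: f(a)\leq f(a')\}$. For a preorder $\sqsubseteq$ on $A$ containing $\leq$, $A/{\sqsubseteq}$ is the set of $\sqsubseteq$-equivalence classes ordered by $[a]\leq[b]$ iff $a\sqsubseteq b$, $q:A\to A/{\sqsubseteq}$ is the quotient map, and $s\sqsubseteq_{\mathbb{M}}t$ (for $s,t\in\mathbb{M}A$) means $\mathbb{M}q(s)\leq\mathbb{M}q(t)$. The preorder $\sqsubseteq$ is a congruence ordering on $\mathfrak{A}$ if $s\sqsubseteq_{\mathbb{M}}t$ implies $\pi(s)\sqsubseteq\pi(t)$. *)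

(* Defs.v *)
From Stdlib Require Import ProofIrrelevance FunctionalExtensionality PropExtensionality.

(* An object: a Xi-sorted family of partially ordered sets.
   Elements of different sorts live in different types, hence are incomparable. *)
Record Obj (Xi : Type) := mkObj {
  car : Xi -> Type;
  ole : forall x, car x -> car x -> Prop;
  ole_refl : forall x a, ole x a a;
  ole_trans : forall x a b c, ole x a b -> ole x b c -> ole x a c;
  ole_antisym : forall x a b, ole x a b -> ole x b a -> a = b }.
Arguments car {Xi} _ _.
Arguments ole {Xi} _ {x} _ _.
Arguments ole_refl {Xi} _ {x} _.

Record Hom {Xi : Type} (A B : Obj Xi) := mkHom {
  fn : forall x, car A x -> car B x;
  fn_mono : forall x a b, ole A a b -> ole B (fn x a) (fn x b) }.
Arguments mkHom {Xi A B} _ _.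
Arguments fn {Xi A B} _ {x} _.

Definition idH {Xi} (A : Obj Xi) : Hom A A :=
  mkHom (fun x a => a) (fun x a b h => h).

Definition compH {Xi} {A B C : Obj Xi} (g : Hom B C) (f : Hom A B) : Hom A C :=
  mkHom (fun x a => fn g (fn f a))
        (fun x a b h => fn_mono _ _ g x _ _ (fn_mono _ _ f x a b h)).

Definition injectiveH {Xi} {A B : Obj Xi} (f : Hom A B) : Prop :=
  forall x (a b : car A x), fn f a = fn f b -> a = b.
Definition surjectiveH {Xi} {A B : Obj Xi} (f : Hom A B) : Prop :=
  forall x (b : car B x), exists a : car A x, fn f a = b.
Definition bijectiveH {Xi} {A B : Obj Xi} (f : Hom A B) : Prop :=
  injectiveH f /\ surjectiveH f.

Section Prod.
Context {Xi : Type} (A B : Obj Xi).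

Definition prod_le x (p q : car A x * car B x) : Prop :=
  ole A (fst p) (fst q) /\ ole B (snd p) (snd q).

Lemma prod_refl x p : prod_le x p p.
Proof. split; apply ole_refl. Qed.
Lemma prod_trans x p q r : prod_le x p q -> prod_le x q r -> prod_le x p r.
Proof. intros [h1 h2] [h3 h4]; split; eapply ole_trans; eauto. Qed.
Lemma prod_antisym x p q : prod_le x p q -> prod_le x q p -> p = q.
Proof.
  destruct p, q; intros [h1 h2] [h3 h4]; simpl in *.
  f_equal; eapply ole_antisym; eauto.
Qed.

Definition ProdO : Obj Xi :=
  mkObj Xi (fun x => (car A x * car B x)%type) prod_le prod_refl prod_trans prod_antisym.

Definition proj0 : Hom ProdO A :=
  mkHom (fun x (p : car ProdO x) => fst p) (fun x (p q : car ProdO x) (h : ole ProdO p q) => proj1 h).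
Definition proj1H : Hom ProdO B :=
  mkHom (fun x (p : car ProdO x) => snd p) (fun x (p q : car ProdO x) (h : ole ProdO p q) => proj2 h).
End Prod.

Section Pair.
Context {Xi : Type} {C A B : Obj Xi} (f : Hom C A) (g : Hom C B).
Definition pairH : Hom C (ProdO A B) :=
  @mkHom Xi C (ProdO A B) (fun x c => (fn f c, fn g c))
        (fun x a b h => conj (fn_mono _ _ f x a b h) (fn_mono _ _ g x a b h)).
End Pair.

Section Sub.
Context {Xi : Type} (A : Obj Xi) (P : forall x, car A x -> Prop).

Definition sub_le x (a b : {a : car A x | P x a}) : Prop := ole A (proj1_sig a) (proj1_sig b).
Lemma sub_refl x a : sub_le x a a.
Proof. apply ole_refl. Qed.
Lemma sub_trans x a b c : sub_le x a b -> sub_le x b c -> sub_le x a c.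
Proof. apply ole_trans. Qed.
Lemma sub_antisym x a b : sub_le x a b -> sub_le x b a -> a = b.
Proof.
  destruct a as [a ha], b as [b hb]; unfold sub_le; simpl; intros h1 h2.
  assert (a = b) by (eapply ole_antisym; eauto). subst.
  f_equal; apply proof_irrelevance.
Qed.

Definition SubO : Obj Xi :=
  mkObj Xi (fun x => {a : car A x | P x a}) sub_le sub_refl sub_trans sub_antisym.

Definition incl : Hom SubO A :=
  mkHom (fun x (a : car SubO x) => proj1_sig a) (fun x (a b : car SubO x) (h : ole SubO a b) => h).
End Sub.

Definition preim {Xi} {A B : Obj Xi} (f : Hom A B) (P : forall x, car B x -> Prop)
  : forall x, car A x -> Prop := fun x a => P x (fn f a).

Definition OrdRel {Xi} (A : Obj Xi) : forall x, car (ProdO A A) x -> Prop :=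
  fun x p => ole A (fst p) (snd p).

Record Monad (Xi : Type) := mkMonad {
  Mo : Obj Xi -> Obj Xi;
  Mm : forall {A B : Obj Xi}, Hom A B -> Hom (Mo A) (Mo B);
  Mm_id : forall A x (s : car (Mo A) x), fn (Mm (idH A)) s = s;
  Mm_comp : forall (A B C : Obj Xi) (g : Hom B C) (f : Hom A B) x (s : car (Mo A) x),
      fn (Mm (compH g f)) s = fn (Mm g) (fn (Mm f) s);
  flat : forall A, Hom (Mo (Mo A)) (Mo A);
  sing : forall A, Hom A (Mo A);
  flat_nat : forall A B (f : Hom A B) x (s : car (Mo (Mo A)) x),
      fn (Mm f) (fn (flat A) s) = fn (flat B) (fn (Mm (Mm f)) s);
  sing_nat : forall A B (f : Hom A B) x (a : car A x),
      fn (Mm f) (fn (sing A) a) = fn (sing B) (fn f a);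
  flat_sing : forall A x (s : car (Mo A) x), fn (flat A) (fn (sing (Mo A)) s) = s;
  flat_Msing : forall A x (s : car (Mo A) x), fn (flat A) (fn (Mm (sing A)) s) = s;
  flat_flat : forall A x (s : car (Mo (Mo (Mo A))) x),
      fn (flat A) (fn (flat (Mo A)) s) = fn (flat A) (fn (Mm (flat A)) s);
  M_inj : forall A B (f : Hom A B), injectiveH f -> injectiveH (Mm f);
  M_surj : forall A B (f : Hom A B), surjectiveH f -> surjectiveH (Mm f);
  M_bij : forall A B (f : Hom A B), bijectiveH f -> bijectiveH (Mm f);
  (* M(f^{-1}[P]) = (Mf)^{-1}[MP], subsets MQ of MA being identified with the
     image of M(incl) *)
  M_preim : forall A B (f : Hom A B) (P : forall x, car B x -> Prop) x (s : car (Mo A) x),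
      (exists u : car (Mo (SubO A (preim f P))) x, fn (Mm (incl A (preim f P))) u = s) <->
      (exists v : car (Mo (SubO B P)) x, fn (Mm (incl B P)) v = fn (Mm f) s);
  M_std : forall A x (s t : car (Mo A) x),
      ole (Mo A) s t <->
      exists u : car (Mo (SubO (ProdO A A) (OrdRel A))) x,
        fn (Mm (proj0 A A)) (fn (Mm (incl _ (OrdRel A))) u) = s /\
        fn (Mm (proj1H A A)) (fn (Mm (incl _ (OrdRel A))) u) = t }.
Arguments Mo {Xi} _ _.
Arguments Mm {Xi} _ {A B} _.
Arguments flat {Xi} _ _.
Arguments sing {Xi} _ _.

Record IsAlg {Xi} (M : Monad Xi) (A : Obj Xi) (pi : Hom (Mo M A) A) : Prop := {
  alg_assoc : forall x (s : car (Mo M (Mo M A)) x),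
      fn pi (fn (Mm M pi) s) = fn pi (fn (flat M A) s);
  alg_unit : forall x (a : car A x), fn pi (fn (sing M A) a) = a }.

Definition IsAlgMorph {Xi} (M : Monad Xi) {A B : Obj Xi}
  (piA : Hom (Mo M A) A) (piB : Hom (Mo M B) B) (phi : Hom A B) : Prop :=
  forall x (s : car (Mo M A) x), fn phi (fn piA s) = fn piB (fn (Mm M phi) s).

Definition prod_pi {Xi} (M : Monad Xi) {A : Obj Xi} (pi : Hom (Mo M A) A)
  : Hom (Mo M (ProdO A A)) (ProdO A A) :=
  pairH (compH pi (Mm M (proj0 A A))) (compH pi (Mm M (proj1H A A))).

Definition kerH {Xi} {A B : Obj Xi} (f : Hom A B) : forall x, car A x -> car A x -> Prop :=
  fun x a a' => ole B (fn f a) (fn f a').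

Record IsPreorderExt {Xi} (A : Obj Xi) (sq : forall x, car A x -> car A x -> Prop) : Prop := {
  sq_refl : forall x a, sq x a a;
  sq_trans : forall x a b c, sq x a b -> sq x b c -> sq x a c;
  sq_ext : forall x a b, ole A a b -> sq x a b }.

Section Quot.
Context {Xi : Type} (A : Obj Xi) (sq : forall x, car A x -> car A x -> Prop)
        (H : IsPreorderExt A sq).

Definition cls x (a : car A x) : car A x -> Prop := fun b => sq x a b /\ sq x b a.

Definition qcar x := {P : car A x -> Prop | exists a, P = cls x a}.

Definition q_le x (P Q : qcar x) : Prop :=
  exists a b, proj1_sig P = cls x a /\ proj1_sig Q = cls x b /\ sq x a b.

Lemma cls_eq_sq x a b : cls x a = cls x b -> sq x a b /\ sq x b a.
Proof.
  intro e. assert (h : cls x b b) by (split; apply (sq_refl _ _ H)).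
  rewrite <- e in h. exact h.
Qed.

Lemma q_refl x P : q_le x P P.
Proof.
  destruct P as [P [a ha]]. exists a, a. simpl. repeat split; auto. apply (sq_refl _ _ H).
Qed.

Lemma q_trans x P Q R : q_le x P Q -> q_le x Q R -> q_le x P R.
Proof.
  intros [a [b [e1 [e2 h1]]]] [b' [c [e3 [e4 h2]]]].
  exists a, c. repeat split; auto.
  rewrite e2 in e3. destruct (cls_eq_sq _ _ _ e3) as [hb _].
  eapply (sq_trans _ _ H); [exact h1|]. eapply (sq_trans _ _ H); eauto.
Qed.

Lemma q_antisym x P Q : q_le x P Q -> q_le x Q P -> P = Q.
Proof.
  intros [a [b [e1 [e2 h1]]]] [b' [a' [e3 [e4 h2]]]].
  destruct P as [P pP], Q as [Q pQ]; simpl in *.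
  assert (P = Q).
  { subst P Q. destruct (cls_eq_sq _ _ _ e3) as [hb1 hb2].
    destruct (cls_eq_sq _ _ _ e4) as [ha1 ha2].
    assert (hba : sq x b a).
    { eapply (sq_trans _ _ H); [exact hb1|]. eapply (sq_trans _ _ H); [exact h2| exact ha2]. }
    apply functional_extensionality; intro c; apply propositional_extensionality.
    unfold cls; split; intros [h3 h4]; split.
    - exact (sq_trans _ _ H _ _ _ _ hba h3).
    - exact (sq_trans _ _ H _ _ _ _ h4 h1).
    - exact (sq_trans _ _ H _ _ _ _ h1 h3).
    - exact (sq_trans _ _ H _ _ _ _ h4 hba). }
  revert pP pQ. rewrite H0. intros pP pQ. rewrite (proof_irrelevance _ pP pQ). reflexivity.
Qed.

Definition QuotO : Obj Xi := mkObj Xi qcar q_le q_refl q_trans q_antisym.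

Definition qmap : Hom A QuotO :=
  @mkHom Xi A QuotO (fun x a => exist (fun P => exists a0, P = cls x a0) (cls x a) (ex_intro _ a eq_refl))
        (fun x a b h => ex_intro _ a (ex_intro _ b (conj eq_refl (conj eq_refl (sq_ext _ _ H x a b h))))).
End Quot.

Definition sqM {Xi} (M : Monad Xi) (A : Obj Xi) (sq : forall x, car A x -> car A x -> Prop)
  (H : IsPreorderExt A sq) x (s t : car (Mo M A) x) : Prop :=
  ole (Mo M (QuotO A sq H)) (fn (Mm M (qmap A sq H)) s) (fn (Mm M (qmap A sq H)) t).

Definition IsCongruenceOrdering {Xi} (M : Monad Xi) (A : Obj Xi) (pi : Hom (Mo M A) A)
  (sq : forall x, car A x -> car A x -> Prop) (H : IsPreorderExt A sq) : Prop :=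
  forall x (s t : car (Mo M A) x), sqM M A sq H x s t -> sq x (fn pi s) (fn pi t).

Definition relSub {Xi} {A : Obj Xi} (sq : forall x, car A x -> car A x -> Prop)
  : forall x, car (ProdO A A) x -> Prop := fun x p => sq x (fst p) (snd p).

(* Main.v *)
Require Import Defs.
From Stdlib Require Import ProofIrrelevance FunctionalExtensionality PropExtensionality IndefiniteDescription.

Lemma hom_ext {Xi} {A B : Obj Xi} (f g : Hom A B) : (forall x a, fn f (x:=x) a = fn g a) -> f = g.
Proof.
  destruct f as [f fm], g as [g gm]; simpl; intro H.
  assert (f = g) by (apply functional_extensionality_dep; intro x; apply functional_extensionality; intro a; apply H).
  subst g. f_equal. apply proof_irrelevance.
Qed.

Lemma Mm_ext {Xi} (M : Monad Xi) {A B} (f g : Hom A B) x (s : car (Mo M A) x) :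
  (forall x a, fn f (x:=x) a = fn g a) -> fn (Mm M f) s = fn (Mm M g) s.
Proof. intro H; rewrite (hom_ext f g H); reflexivity. Qed.

Lemma MM {Xi} (M : Monad Xi) {A B C} (f : Hom A B) (g : Hom B C) (h : Hom A C) :
  (forall x a, fn g (fn f (x:=x) a) = fn h a) -> forall x (s : car (Mo M A) x), fn (Mm M g) (fn (Mm M f) s) = fn (Mm M h) s.
Proof. intros H x s. rewrite <- Mm_comp. apply Mm_ext. exact H. Qed.

Lemma sig_eq {T} {P : T -> Prop} (u v : sig P) : proj1_sig u = proj1_sig v -> u = v.
Proof. destruct u, v; simpl; intro; subst; f_equal; apply proof_irrelevance. Qed.

Definition Disc {Xi} (A : Obj Xi) : Obj Xi :=
  mkObj Xi (car A) (fun x a b => a = b) (fun x a => eq_refl)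
    (fun x a b c h1 h2 => eq_trans h1 h2) (fun x a b h1 h2 => h1).

Definition discH {Xi} {A B : Obj Xi} (f : forall x, car A x -> car B x) : Hom (Disc A) B.
Proof. refine (@mkHom Xi (Disc A) B f _). intros x a b h. simpl in h. subst. apply ole_refl. Defined.

Definition iotaH {Xi} (A : Obj Xi) : Hom (Disc A) A := discH (fun x a => a).

Lemma iota_bij {Xi} (A : Obj Xi) : bijectiveH (iotaH A).
Proof. split. intros x a b h; exact h. intros x b; exists b; reflexivity. Qed.

Section S.
Context {Xi : Type} (M : Monad Xi) (A : Obj Xi) (pi : Hom (Mo M A) A) (Hpi : IsAlg M A pi)
  (sq : forall x, car A x -> car A x -> Prop) (Hsq : IsPreorderExt A sq).

Notation Q := (QuotO A sq Hsq).
Notation q := (qmap A sq Hsq).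
Notation S := (SubO (ProdO A A) (relSub sq)).

Lemma q_eq x a b : sq x a b -> sq x b a -> fn q a = fn q b.
Proof.
  intros h1 h2. apply sig_eq. simpl. unfold cls.
  apply functional_extensionality; intro c; apply propositional_extensionality;
  split; intros [h3 h4]; split; eapply (sq_trans _ _ Hsq); eauto.
Qed.

Lemma q_le_sq x a b : ole Q (fn q a) (fn q b) -> sq x a b.
Proof.
  intros [a0 [b0 [e1 [e2 h]]]]. simpl in e1, e2.
  destruct (cls_eq_sq A sq Hsq x a a0 e1) as [h1 h2].
  destruct (cls_eq_sq A sq Hsq x b b0 e2) as [h3 h4].
  eapply (sq_trans _ _ Hsq); [exact h1|]. eapply (sq_trans _ _ Hsq); [exact h| exact h4].
Qed.

Lemma sq_q_le x a b : sq x a b -> ole Q (fn q a) (fn q b).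
Proof. intro h. exists a, b. split; [reflexivity| split; [reflexivity| exact h]]. Qed.

Definition sigma x (c : car Q x) : car A x :=
  proj1_sig (constructive_indefinite_description _ (proj2_sig c)).

Lemma sigma_spec x c : proj1_sig c = cls A sq x (sigma x c).
Proof. unfold sigma. destruct (constructive_indefinite_description _ _). simpl. auto. Qed.

Lemma q_sigma x c : fn q (sigma x c) = c.
Proof. apply sig_eq. simpl. symmetry. apply sigma_spec. Qed.

Lemma sq_sigma x a : sq x a (sigma x (fn q a)) /\ sq x (sigma x (fn q a)) a.
Proof. apply (cls_eq_sq A sq Hsq). exact (sigma_spec x (fn q a)). Qed.

Lemma ole_sigma x c d : ole Q c d -> sq x (sigma x c) (sigma x d).
Proof. intro h. apply q_le_sq. rewrite !q_sigma. exact h. Qed.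

Lemma q_surj : surjectiveH q.
Proof. intros x c; exists (sigma x c); apply q_sigma. Qed.

Definition tau x (z : car (Mo M Q) x) : car (Mo M A) x :=
  proj1_sig (constructive_indefinite_description _ (M_surj _ M _ _ q q_surj x z)).

Lemma tau_spec x z : fn (Mm M q) (tau x z) = z.
Proof. unfold tau. destruct (constructive_indefinite_description _ _). simpl. auto. Qed.

Section C1.
Hypothesis H1 : IsCongruenceOrdering M A pi sq Hsq.

Definition piB : Hom (Mo M Q) Q.
Proof.
  refine (mkHom (fun x z => fn q (fn pi (tau x z))) _).
  intros x z z' h. apply sq_q_le. apply H1. unfold sqM. rewrite !tau_spec. exact h.
Defined.

Lemma piB_q x s : fn piB (fn (Mm M q) s) = fn q (fn pi (x:=x) s).
Proof.
  simpl. apply q_eq; apply H1; unfold sqM; rewrite tau_spec; apply ole_refl.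
Qed.

Lemma c1_c2 : exists (B : Obj Xi) (piB : Hom (Mo M B) B) (phi : Hom A B),
              IsAlg M B piB /\ IsAlgMorph M pi piB phi /\
              (forall x (a a' : car A x), sq x a a' <-> kerH phi x a a').
Proof.
  exists Q, piB, q. split; [|split].
  - split.
    + intros x Z.
      destruct (M_surj _ M _ _ (Mm M q) (M_surj _ M _ _ q q_surj) x Z) as [S0 e]. subst Z.
      rewrite (MM M (Mm M q) piB (compH q pi)) by (intros; apply piB_q).
      rewrite Mm_comp, piB_q.
      rewrite <- flat_nat, piB_q.
      f_equal. apply (alg_assoc M A pi Hpi).
    + intros x c. assert (e := q_sigma x c). rewrite <- e.
      rewrite <- sing_nat, piB_q. f_equal. apply (alg_unit M A pi Hpi).
  - intros x s. symmetry. apply piB_q.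
  - intros x a a'. unfold kerH. split; [apply sq_q_le | apply q_le_sq].
Qed.
End C1.

Definition kmap {B : Obj Xi} (phi : Hom A B) (Hk : forall x a a', sq x a a' -> kerH phi x a a')
  : Hom S (SubO (ProdO B B) (OrdRel B)).
Proof.
  refine (@mkHom Xi S (SubO (ProdO B B) (OrdRel B))
    (fun x p => exist _ (fn phi (fst (proj1_sig p)), fn phi (snd (proj1_sig p))) (Hk x _ _ (proj2_sig p))) _).
  intros x [[a b] h] [[a' b'] h'] [l1 l2]. split; simpl in *; apply fn_mono; assumption.
Defined.

Definition C3 := forall x (u : car (Mo M (SubO (ProdO A A) (relSub sq))) x),
              sq x (fn pi (fn (Mm M (proj0 A A)) (fn (Mm M (incl _ (relSub sq))) u)))
                   (fn pi (fn (Mm M (proj1H A A)) (fn (Mm M (incl _ (relSub sq))) u))).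

Lemma c2_c3 : (exists (B : Obj Xi) (piB : Hom (Mo M B) B) (phi : Hom A B),
              IsAlg M B piB /\ IsAlgMorph M pi piB phi /\
              (forall x (a a' : car A x), sq x a a' <-> kerH phi x a a')) -> C3.
Proof.
  intros [B [pB [phi [HB [Hm Hk]]]]] x u.
  pose (Hk' := fun x a a' => proj1 (Hk x a a')).
  assert (Hle : ole (Mo M B)
     (fn (Mm M (proj0 B B)) (fn (Mm M (incl _ (OrdRel B))) (fn (Mm M (kmap phi Hk')) u)))
     (fn (Mm M (proj1H B B)) (fn (Mm M (incl _ (OrdRel B))) (fn (Mm M (kmap phi Hk')) u)))).
  { apply (M_std _ M B x). eexists; split; reflexivity. }
  assert (e0 : fn (Mm M (proj0 B B)) (fn (Mm M (incl _ (OrdRel B))) (fn (Mm M (kmap phi Hk')) u))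
     = fn (Mm M phi) (fn (Mm M (proj0 A A)) (fn (Mm M (incl _ (relSub sq))) u))).
  { rewrite <- !Mm_comp. apply Mm_ext. intros; reflexivity. }
  assert (e1 : fn (Mm M (proj1H B B)) (fn (Mm M (incl _ (OrdRel B))) (fn (Mm M (kmap phi Hk')) u))
     = fn (Mm M phi) (fn (Mm M (proj1H A A)) (fn (Mm M (incl _ (relSub sq))) u))).
  { rewrite <- !Mm_comp. apply Mm_ext. intros; reflexivity. }
  apply Hk. unfold kerH. rewrite !Hm. apply fn_mono. rewrite <- e0, <- e1. exact Hle.
Qed.

Lemma c3_c1 : C3 -> IsCongruenceOrdering M A pi sq Hsq.
Proof.
  intros H3 x s t Hst. unfold sqM in Hst.
  destruct (proj1 (M_std _ M Q x _ _) Hst) as [w [ew0 ew1]].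
  pose (W := SubO (ProdO Q Q) (OrdRel Q)).
  destruct (proj2 (M_bij _ M _ _ (iotaH W) (iota_bij W)) x w) as [wd ewd].
  destruct (proj2 (M_bij _ M _ _ (iotaH A) (iota_bij A)) x s) as [sd esd].
  destruct (proj2 (M_bij _ M _ _ (iotaH A) (iota_bij A)) x t) as [td etd].
  pose (h := @discH Xi W S (fun x p => exist (relSub sq x)
     (sigma x (fst (proj1_sig p)), sigma x (snd (proj1_sig p))) (ole_sigma x _ _ (proj2_sig p)))).
  pose (gL := @discH Xi A S (fun x a => exist (relSub sq x) (a, sigma x (fn q a)) (proj1 (sq_sigma x a)))).
  pose (gR := @discH Xi A S (fun x a => exist (relSub sq x) (sigma x (fn q a), a) (proj2 (sq_sigma x a)))).
  pose (r := @discH Xi A A (fun x a => sigma x (fn q a))).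
  pose (sdH := @discH Xi Q A sigma).
  pose (qd := @discH Xi A (Disc Q) (fun x a => fn q a)).
  pose (pi0d := @discH Xi W (Disc Q) (fun x p => fst (proj1_sig p))).
  pose (pi1d := @discH Xi W (Disc Q) (fun x p => snd (proj1_sig p))).
  assert (K0 : fn (Mm M pi0d) wd = fn (Mm M qd) sd).
  { apply (proj1 (M_bij _ M _ _ (iotaH Q) (iota_bij Q))).
    transitivity (fn (Mm M q) s).
    - rewrite <- ew0, <- ewd. rewrite <- !Mm_comp. apply Mm_ext. intros; reflexivity.
    - rewrite <- esd. rewrite <- !Mm_comp. apply Mm_ext. intros; reflexivity. }
  assert (K1 : fn (Mm M pi1d) wd = fn (Mm M qd) td).
  { apply (proj1 (M_bij _ M _ _ (iotaH Q) (iota_bij Q))).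
    transitivity (fn (Mm M q) t).
    - rewrite <- ew1, <- ewd. rewrite <- !Mm_comp. apply Mm_ext. intros; reflexivity.
    - rewrite <- etd. rewrite <- !Mm_comp. apply Mm_ext. intros; reflexivity. }
  assert (L := H3 x (fn (Mm M gL) sd)).
  assert (E1 : fn (Mm M (proj0 A A)) (fn (Mm M (incl _ (relSub sq))) (fn (Mm M gL) sd)) = s).
  { rewrite <- esd. rewrite <- !Mm_comp. apply Mm_ext. intros; reflexivity. }
  assert (E2 : fn (Mm M (proj1H A A)) (fn (Mm M (incl _ (relSub sq))) (fn (Mm M gL) sd)) = fn (Mm M r) sd).
  { rewrite <- !Mm_comp. apply Mm_ext. intros; reflexivity. }
  rewrite E1, E2 in L.
  assert (R := H3 x (fn (Mm M gR) td)).
  assert (E3 : fn (Mm M (proj1H A A)) (fn (Mm M (incl _ (relSub sq))) (fn (Mm M gR) td)) = t).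
  { rewrite <- etd. rewrite <- !Mm_comp. apply Mm_ext. intros; reflexivity. }
  assert (E4 : fn (Mm M (proj0 A A)) (fn (Mm M (incl _ (relSub sq))) (fn (Mm M gR) td)) = fn (Mm M r) td).
  { rewrite <- !Mm_comp. apply Mm_ext. intros; reflexivity. }
  rewrite E3, E4 in R.
  assert (Md := H3 x (fn (Mm M h) wd)).
  assert (E5 : fn (Mm M (proj0 A A)) (fn (Mm M (incl _ (relSub sq))) (fn (Mm M h) wd)) = fn (Mm M r) sd).
  { transitivity (fn (Mm M sdH) (fn (Mm M pi0d) wd)).
    - rewrite <- !Mm_comp. apply Mm_ext. intros; reflexivity.
    - rewrite K0. rewrite <- !Mm_comp. apply Mm_ext. intros; reflexivity. }
  assert (E6 : fn (Mm M (proj1H A A)) (fn (Mm M (incl _ (relSub sq))) (fn (Mm M h) wd)) = fn (Mm M r) td).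
  { transitivity (fn (Mm M sdH) (fn (Mm M pi1d) wd)).
    - rewrite <- !Mm_comp. apply Mm_ext. intros; reflexivity.
    - rewrite K1. rewrite <- !Mm_comp. apply Mm_ext. intros; reflexivity. }
  rewrite E5, E6 in Md.
  eapply (sq_trans _ _ Hsq); [exact L|]. eapply (sq_trans _ _ Hsq); [exact Md| exact R].
Qed.

End S.

Theorem proposition3p8 (Xi : Type) (M : Monad Xi) (A : Obj Xi) (pi : Hom (Mo M A) A)
  (Hpi : IsAlg M A pi) (sq : forall x, car A x -> car A x -> Prop)
  (Hsq : IsPreorderExt A sq) :
  let C1 := IsCongruenceOrdering M A pi sq Hsq in
  let C2 := exists (B : Obj Xi) (piB : Hom (Mo M B) B) (phi : Hom A B),
              IsAlg M B piB /\ IsAlgMorph M pi piB phi /\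
              (forall x (a a' : car A x), sq x a a' <-> kerH phi x a a') in
  let C3 := forall x (u : car (Mo M (SubO (ProdO A A) (relSub sq))) x),
              sq x (fn pi (fn (Mm M (proj0 A A)) (fn (Mm M (incl _ (relSub sq))) u)))
                   (fn pi (fn (Mm M (proj1H A A)) (fn (Mm M (incl _ (relSub sq))) u))) in
  let C4 := forall x (u : car (Mo M (SubO (ProdO A A) (relSub sq))) x),
              relSub sq x (fn (prod_pi M pi) (fn (Mm M (incl _ (relSub sq))) u)) in
  (C1 <-> C2) /\ (C1 <-> C3) /\ (C1 <-> C4).
Proof.
  cbv zeta.
  assert (a12 := c1_c2 M A pi Hpi sq Hsq).
  assert (a23 := c2_c3 M A pi sq).
  assert (a31 := c3_c1 M A pi sq Hsq).
  unfold C3 in *.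
  split; [|split]; split; intro H.
  - exact (a12 H).
  - exact (a31 (a23 H)).
  - exact (a23 (a12 H)).
  - exact (a31 H).
  - exact (a23 (a12 H)).
  - exact (a31 H).
Qed.
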